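(* Let $f$ be a convex function on $\mathbb{R}^m$ and let $C,C'\subset\mathbb{R}^m$ be open convex sets such that $f|_C$ and $f|_{C'}$ are affine. Suppose $v\in\operatorname{recc}(C)\cap\operatorname{recc}(C')$. Then $\nabla_vf(x)=\nabla_vf(x')$ for all $x\in C$, $x'\in C'$, where $\nabla_v$ denotes the directional derivative in direction $v$.
   Context: $\operatorname{recc}(S)=\{v\in\mathbb{R}^m:\forall x\in S,\ x+v\in S\}$ is the recession cone of a convex set $S$. *)

(* Defs.v *)
From Stdlib Require Import Reals Lra.
From Stdlib Require Fin.
Open Scope R_scope.

Definition vec (m : nat) := Fin.t m -> R.

Definition vadd {m} (x y : vec m) : vec m := fun i => x i + y i.
Definition vscale {m} (c : R) (x : vec m) : vec m := fun i => c * x i.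

Definition convex_vset {m} (C : vec m -> Prop) : Prop :=
  forall x y t, C x -> C y -> 0 <= t <= 1 ->
    C (vadd (vscale (1 - t) x) (vscale t y)).

(* Open set (product / sup-norm topology, equal to the Euclidean one) *)
Definition open_vset {m} (C : vec m -> Prop) : Prop :=
  forall x, C x -> exists eps, 0 < eps /\
    forall y, (forall i, Rabs (y i - x i) < eps) -> C y.

Definition convex_fun {m} (f : vec m -> R) : Prop :=
  forall x y t, 0 <= t <= 1 ->
    f (vadd (vscale (1 - t) x) (vscale t y)) <= (1 - t) * f x + t * f y.

Definition affine_on {m} (f : vec m -> R) (C : vec m -> Prop) : Prop :=
  exists (L : vec m -> R) (b : R),
    (forall x y, L (vadd x y) = L x + L y) /\
    (forall c x, L (vscale c x) = c * L x) /\
    (forall x, C x -> f x = L x + b).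

Definition recc {m} (S : vec m -> Prop) (v : vec m) : Prop :=
  forall x, S x -> S (vadd x v).

Definition dir_deriv {m} (f : vec m -> R) (x v : vec m) (l : R) : Prop :=
  derivable_pt_lim (fun t => f (vadd x (vscale t v))) 0 l.

(* Main.v *)
Require Import Defs.
From Stdlib Require Import Reals.
From Stdlib Require Import Lra FunctionalExtensionality.
From Stdlib Require Fin.
Open Scope R_scope.

Lemma vbound (m : nat) (v : vec m) : exists M, 0 <= M /\ forall i, Rabs (v i) <= M.
Proof.
  induction m as [|m IH].
  - exists 0. split; [lra|]. intros i. exact (Fin.case0 (fun _ => _) i).
  - destruct (IH (fun i => v (Fin.FS i))) as [M [HM0 HM]].
    exists (Rmax (Rabs (v Fin.F1)) M). split.
    + apply Rle_trans with M; [lra| apply Rmax_r].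
    + intros i. apply (Fin.caseS' i (fun i => Rabs (v i) <= Rmax (Rabs (v Fin.F1)) M)).
      * apply Rmax_l.
      * intros p. apply Rle_trans with M; [apply HM| apply Rmax_r].
Qed.

Lemma ray_affine {m} (f : vec m -> R) C L b v x :
  (forall x y, L (vadd x y) = L x + L y) ->
  (forall c x, L (vscale c x) = c * L x) ->
  (forall x, C x -> f x = L x + b) ->
  forall t, C (vadd x (vscale t v)) -> f (vadd x (vscale t v)) = (L x + b) + t * L v.
Proof. intros HA HS Hf t Ht. rewrite Hf by exact Ht. rewrite HA, HS. ring. Qed.

Lemma ray_nat {m} (C : vec m -> Prop) v x :
  recc C v -> C x -> forall n, C (vadd x (vscale (INR n) v)).
Proof.
  intros Hr Hx n. induction n as [|n IH].
  - replace (vadd x (vscale (INR 0) v)) with x; [exact Hx|].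
    apply functional_extensionality; intro i; unfold vadd, vscale; simpl; ring.
  - replace (vadd x (vscale (INR (S n)) v)) with (vadd (vadd x (vscale (INR n) v)) v).
    + apply Hr, IH.
    + apply functional_extensionality; intro i; unfold vadd, vscale; rewrite S_INR; ring.
Qed.

Lemma slope_le {m} (f : vec m -> R) v x x' c c' a a' :
  convex_fun f ->
  (forall n, f (vadd x (vscale (INR n) v)) = c + INR n * a) ->
  (forall n, f (vadd x' (vscale (INR n) v)) = c' + INR n * a') ->
  a <= a'.
Proof.
  intros Hc H1 H2.
  set (w := vadd (vscale 2 x) (vscale (-1) x')).
  assert (K : forall n, INR n * (a - a') <= / 2 * f w + / 2 * c' - c).
  { intro n.
    pose proof (Hc w (vadd x' (vscale (INR (2 * n)) v)) (1/2) ltac:(lra)) as Hn.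
    replace (vadd (vscale (1 - 1 / 2) w) (vscale (1 / 2) (vadd x' (vscale (INR (2 * n)) v))))
      with (vadd x (vscale (INR n) v)) in Hn.
    - rewrite H1, H2 in Hn. rewrite mult_INR in Hn. simpl in Hn. lra.
    - apply functional_extensionality; intro i; unfold w, vadd, vscale.
      rewrite mult_INR; simpl. field. }
  destruct (Rle_dec a a') as [|Hn]; [assumption|].
  destruct (INR_archimed (a - a') (/ 2 * f w + / 2 * c' - c)) as [n Hnn]; [lra|].
  specialize (K n). lra.
Qed.

Lemma local_deriv {m} (f : vec m -> R) C L b v x :
  open_vset C ->
  (forall x y, L (vadd x y) = L x + L y) ->
  (forall c x, L (vscale c x) = c * L x) ->
  (forall x, C x -> f x = L x + b) ->
  C x -> dir_deriv f x v (L v).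
Proof.
  intros Ho HA HS Hf Hx.
  destruct (Ho x Hx) as [eps [He Hy]].
  destruct (vbound m v) as [M [HM0 HM]].
  assert (Hin : forall t, Rabs t < eps / (M + 1) -> C (vadd x (vscale t v))).
  { intros t Ht. apply Hy. intro i. unfold vadd, vscale.
    replace (x i + t * v i - x i) with (t * v i) by ring.
    rewrite Rabs_mult.
    apply Rle_lt_trans with (Rabs t * (M + 1)).
    - apply Rmult_le_compat_l; [apply Rabs_pos|]. specialize (HM i). lra.
    - apply Rmult_lt_compat_r with (r := M + 1) in Ht; [|lra].
      unfold Rdiv in Ht. rewrite Rmult_assoc, Rinv_l, Rmult_1_r in Ht; lra. }
  unfold dir_deriv, derivable_pt_lim. intros e He'.
  assert (Hd : 0 < eps / (M + 1)) by (apply Rdiv_lt_0_compat; lra).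
  exists (mkposreal _ Hd). simpl. intros h Hh0 Hh.
  rewrite Rplus_0_l.
  rewrite (ray_affine f C L b v x HA HS Hf h (Hin h Hh)).
  rewrite (ray_affine f C L b v x HA HS Hf 0 (Hin 0 ltac:(rewrite Rabs_R0; lra))).
  replace ((L x + b + h * L v - (L x + b + 0 * L v)) / h - L v) with 0 by (field; auto).
  rewrite Rabs_R0. lra.
Qed.

Theorem mainTheorem16 (m : nat) (f : vec m -> R) (C C' : vec m -> Prop) (v : vec m) :
  convex_fun f ->
  open_vset C -> convex_vset C ->
  open_vset C' -> convex_vset C' ->
  affine_on f C -> affine_on f C' ->
  recc C v -> recc C' v ->
  forall x x', C x -> C' x' ->
    exists l, dir_deriv f x v l /\ dir_deriv f x' v l.
Proof.
  intros Hc Ho _ Ho' _ [L [b [HA [HS Hf]]]] [L' [b' [HA' [HS' Hf']]]] Hr Hr' x x' Hx Hx'.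
  assert (E1 : forall n, f (vadd x (vscale (INR n) v)) = (L x + b) + INR n * L v)
    by (intro n; apply (ray_affine f C); auto; apply ray_nat; auto).
  assert (E2 : forall n, f (vadd x' (vscale (INR n) v)) = (L' x' + b') + INR n * L' v)
    by (intro n; apply (ray_affine f C'); auto; apply ray_nat; auto).
  assert (Heq : L v = L' v).
  { apply Rle_antisym.
    - exact (slope_le f v x x' _ _ _ _ Hc E1 E2).
    - exact (slope_le f v x' x _ _ _ _ Hc E2 E1). }
  exists (L v). split.
  - exact (local_deriv f C L b v x Ho HA HS Hf Hx).
  - rewrite Heq. exact (local_deriv f C' L' b' v x' Ho' HA' HS' Hf' Hx').
Qed.
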